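(* Let $q$ be a Boolean conjunctive query without self-join. If $q$ is safe, then $\mathsf{CERTAINTY}(q)$ is first-order expressible.
   Context: Relation names have signatures $[n,k]$ ($n\ge k\ge 1$; arity $n$, primary key positions $1,\dots,k$). Atoms have variables or constants as arguments; a fact is an atom without variables; facts are key-equal if they have the same relation name and agree on the primary key. For an atom $F$, $\mathit{key}(F)$ is the set of variables in its primary-key positions and $\mathit{vars}(F)$ the set of its variables. An uncertain database is a finite set of facts; a repair is a maximal subset with no two distinct key-equal facts. A Boolean conjunctive query $q$ is a finite set of atoms (existentially closed conjunction), $\mathit{vars}(q)$ its set of variables; it has a self-join if some relation name occurs in two of its atoms. $\mathsf{CERTAINTY}(q)$ is the set of uncertain databases all of whose repairs satisfy $q$; it is first-order expressible if there is a first-order sentence $\varphi$ such that for every uncertain database ${\mathbf{db}}$, ${\mathbf{db}}\in\mathsf{CERTAINTY}(q)$ iff ${\mathbf{db}}\models\varphi$. For a variable $x$ and constant $a$, $q[x\mapsto a]$ denotes $q$ with every occurrence of $x$ replaced by $a$. Safety: $q$ is safe iff the following procedure $\mathrm{IsSafe}(q)$ returns true, where the rules are tried in order and the first applicable rule is executed ($a$ is an arbitrary fixed constant): (SE1) if $|q|=1$ and $\mathit{vars}(q)=\emptyset$, return true; (SE2) if $q=q_1\cup q_2$ with $q_1\neq\emptyset\neq q_2$ and $\mathit{vars}(q_1)\cap\mathit{vars}(q_2)=\emptyset$, return $\mathrm{IsSafe}(q_1)\wedge\mathrm{IsSafe}(q_2)$; (SE3) if $\bigcap_{F\in q}\mathit{key}(F)\neq\emptyset$,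 select $x$ in this intersection and return $\mathrm{IsSafe}(q[x\mapsto a])$; (SE4) if some $F\in q$ has $\mathit{key}(F)=\emptyset\neq\mathit{vars}(F)$, select such $F$ and some $x\in\mathit{vars}(F)$ and return $\mathrm{IsSafe}(q[x\mapsto a])$; otherwise return false. *)

(* Defs.v *)
From Stdlib Require Import List Arith.
Import ListNotations.

(* A relation name with signature [n,k]: an identifier, its arity n and the
   number k of primary-key positions (positions 1..k). *)
Record relname := RelName { rname : nat; rarity : nat; rkey : nat }.
Definition wf_rel (R : relname) : Prop := 1 <= rkey R /\ rkey R <= rarity R.

Inductive term := TVar (x : nat) | TCst (c : nat).

Record atom := Atom { arel : relname; aargs : list term }.
Record fact := Fact { frel : relname; fargs : list nat }.

Definition wf_atom (A : atom) : Prop :=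
  wf_rel (arel A) /\ length (aargs A) = rarity (arel A).
Definition wf_fact (f : fact) : Prop :=
  wf_rel (frel f) /\ length (fargs f) = rarity (frel f).

Definition term_vars (t : term) : list nat :=
  match t with TVar x => [x] | TCst _ => [] end.

Definition avars (A : atom) : list nat := flat_map term_vars (aargs A).
Definition akey (A : atom) : list nat :=
  flat_map term_vars (firstn (rkey (arel A)) (aargs A)).

(* An uncertain database is a finite set of facts (a list read as a set). *)
Definition db := list fact.
Definition wf_db (d : db) : Prop := Forall wf_fact d.

Definition key_equal (f g : fact) : Prop :=
  frel f = frel g /\
  firstn (rkey (frel f)) (fargs f) = firstn (rkey (frel g)) (fargs g).

Definition consistent (r : db) : Prop :=
  forall f g, In f r -> In g r -> key_equal f g -> f = g.

Definition is_repair (r d : db) : Prop :=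
  incl r d /\ consistent r /\
  (forall r', incl r r' -> incl r' d -> consistent r' -> incl r' r).

Definition query := list atom.
Definition wf_query (q : query) : Prop := Forall wf_atom q.

Definition qvars (q : query) : list nat := flat_map avars q.

Definition self_join_free (q : query) : Prop :=
  forall A B, In A q -> In B q -> arel A = arel B -> A = B.

Definition eval_term (v : nat -> nat) (t : term) : nat :=
  match t with TVar x => v x | TCst c => c end.

Definition ground (v : nat -> nat) (A : atom) : fact :=
  Fact (arel A) (map (eval_term v) (aargs A)).

Definition satisfies (d : db) (q : query) : Prop :=
  exists v : nat -> nat, forall A, In A q -> In (ground v A) d.

Definition certain (q : query) (d : db) : Prop :=
  forall r, is_repair r d -> satisfies r q.

Inductive formula :=
| FAtom (R : relname) (ts : list term)
| FEq (t1 t2 : term)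
| FTrue
| FNot (phi : formula)
| FAnd (phi psi : formula)
| FOr (phi psi : formula)
| FExists (x : nat) (phi : formula)
| FForall (x : nat) (phi : formula).

Definition upd (v : nat -> nat) (x c : nat) : nat -> nat :=
  fun y => if Nat.eqb y x then c else v y.

Fixpoint holds (d : db) (v : nat -> nat) (phi : formula) : Prop :=
  match phi with
  | FAtom R ts => In (Fact R (map (eval_term v) ts)) d
  | FEq t1 t2 => eval_term v t1 = eval_term v t2
  | FTrue => True
  | FNot p => ~ holds d v p
  | FAnd p1 p2 => holds d v p1 /\ holds d v p2
  | FOr p1 p2 => holds d v p1 \/ holds d v p2
  | FExists x p => exists c, holds d (upd v x c) p
  | FForall x p => forall c, holds d (upd v x c) p
  end.

Fixpoint fv (phi : formula) : list nat :=
  match phi with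
  | FAtom _ ts => flat_map term_vars ts
  | FEq t1 t2 => term_vars t1 ++ term_vars t2
  | FTrue => []
  | FNot p => fv p
  | FAnd p1 p2 | FOr p1 p2 => fv p1 ++ fv p2
  | FExists x p | FForall x p => remove Nat.eq_dec x (fv p)
  end.

Definition sentence (phi : formula) : Prop := fv phi = [].

(* d |= phi for a sentence (the valuation is irrelevant for sentences) *)
Definition models (d : db) (phi : formula) : Prop := holds d (fun _ => 0) phi.

Definition fo_expressible (q : query) : Prop :=
  exists phi, sentence phi /\
    forall d : db, wf_db d -> (certain q d <-> models d phi).

Definition subst_term (x a : nat) (t : term) : term :=
  match t with
  | TVar y => if Nat.eqb y x then TCst a else TVar y
  | TCst c => TCst c
  end.
Definition subst_atom (x a : nat) (A : atom) : atom :=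
  Atom (arel A) (map (subst_term x a) (aargs A)).
Definition subst (x a : nat) (q : query) : query := map (subst_atom x a) q.

(* applicability conditions of the rules (q read as a set) *)
Definition SE1_app (q : query) : Prop :=
  (exists F, forall G, In G q <-> G = F) /\ qvars q = [].
Definition SE2_app (q : query) : Prop :=
  exists q1 q2 : query, q1 <> [] /\ q2 <> [] /\
    (forall G, In G q <-> In G q1 \/ In G q2) /\
    (forall x, In x (qvars q1) -> ~ In x (qvars q2)).
Definition SE3_app (q : query) : Prop :=
  exists x, forall F, In F q -> In x (akey F).

(* safe a q : the procedure IsSafe (with fixed constant a) has a run
   returning true on q. Rules are tried in order. *)
Inductive safe (a : nat) : query -> Prop :=
| safe_SE1 q : SE1_app q -> safe a q
| safe_SE2 q q1 q2 :
    ~ SE1_app q ->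
    q1 <> [] -> q2 <> [] ->
    (forall G, In G q <-> In G q1 \/ In G q2) ->
    (forall x, In x (qvars q1) -> ~ In x (qvars q2)) ->
    safe a q1 -> safe a q2 -> safe a q
| safe_SE3 q x :
    ~ SE1_app q -> ~ SE2_app q ->
    (forall F, In F q -> In x (akey F)) ->
    safe a (subst x a q) -> safe a q
| safe_SE4 q F x :
    ~ SE1_app q -> ~ SE2_app q -> ~ SE3_app q ->
    In F q -> akey F = [] -> In x (avars F) ->
    safe a (subst x a q) -> safe a q.

(* Main.v *)
Require Import Defs.
From Stdlib Require Import List Arith.
From Stdlib Require Import Lia Classical ClassicalEpsilon.
Require Import Defs.
Import ListNotations.

Definition relname_eq_dec : forall x y : relname, {x=y}+{x<>y}.
Proof. decide equality; apply Nat.eq_dec. Defined.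
Definition term_eq_dec : forall x y : term, {x=y}+{x<>y}.
Proof. decide equality; apply Nat.eq_dec. Defined.
Definition atom_eq_dec : forall x y : atom, {x=y}+{x<>y}.
Proof. decide equality. apply (list_eq_dec term_eq_dec). apply relname_eq_dec. Defined.
Definition fact_eq_dec : forall x y : fact, {x=y}+{x<>y}.
Proof. decide equality. apply (list_eq_dec Nat.eq_dec). apply relname_eq_dec. Defined.

Lemma in_vars_iff z ts : In z (flat_map term_vars ts) <-> In (TVar z) ts.
Proof.
  rewrite in_flat_map; split.
  - intros [t [Ht Hz]]; destruct t; simpl in Hz; [destruct Hz as [->|[]]; auto|contradiction].
  - intros H; exists (TVar z); simpl; auto.
Qed.

Lemma eval_ext v v' t : (forall z, In z (term_vars t) -> v z = v' z) -> eval_term v t = eval_term v' t.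
Proof. destruct t; simpl; auto. Qed.

Lemma map_eval_ext v v' ts : (forall z, In z (flat_map term_vars ts) -> v z = v' z) ->
  map (eval_term v) ts = map (eval_term v') ts.
Proof.
  intros H; apply map_ext_in; intros t Ht; apply eval_ext; intros z Hz; apply H.
  apply in_flat_map; eauto.
Qed.

Lemma ground_ext w w' A : (forall z, In z (avars A) -> w z = w' z) -> ground w A = ground w' A.
Proof. intros H; unfold ground; f_equal; apply map_eval_ext; exact H. Qed.

Lemma upd_eq v x c : upd v x c x = c.
Proof. unfold upd; rewrite Nat.eqb_refl; auto. Qed.
Lemma upd_neq v x c y : y <> x -> upd v x c y = v y.
Proof. intros H; unfold upd; apply Nat.eqb_neq in H; rewrite H; auto. Qed.

Fixpoint upds (v : nat -> nat) (ys cs : list nat) : nat -> nat :=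
  match ys, cs with
  | y :: ys', c :: cs' => upds (upd v y c) ys' cs'
  | _, _ => v
  end.

Lemma upds_notin v ys cs z : ~ In z ys -> upds v ys cs z = v z.
Proof.
  revert v cs; induction ys as [|y ys IH]; intros v cs H; destruct cs; simpl; auto.
  rewrite IH; [apply upd_neq|]; simpl in H; intuition.
Qed.

Lemma upds_map v ys cs : NoDup ys -> length cs = length ys -> map (upds v ys cs) ys = cs.
Proof.
  revert v cs; induction ys as [|y ys IH]; intros v cs Hn Hl; destruct cs; simpl in *; try lia; auto.
  inversion Hn; subst. f_equal.
  - rewrite upds_notin by auto. apply upd_eq.
  - apply IH; auto.
Qed.

Definition ForallL (ys : list nat) (p : formula) := fold_right FForall p ys.
Definition ExistsL (ys : list nat) (p : formula) := fold_right FExists p ys.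

Lemma holds_ForallL d v ys p : holds d v (ForallL ys p) <->
  forall cs, length cs = length ys -> holds d (upds v ys cs) p.
Proof.
  revert v; induction ys as [|y ys IH]; intros v; simpl.
  - split; intros H; [intros cs Hl; destruct cs; simpl in *; auto; lia|apply (H []); auto].
  - split.
    + intros H cs Hl; destruct cs as [|c cs]; simpl in Hl; try lia.
      simpl. apply (proj1 (IH _) (H c)); lia.
    + intros H c; apply IH; intros cs Hl; apply (H (c :: cs)); simpl; lia.
Qed.

Lemma holds_ExistsL d v ys p : holds d v (ExistsL ys p) <->
  exists cs, length cs = length ys /\ holds d (upds v ys cs) p.
Proof.
  revert v; induction ys as [|y ys IH]; intros v; simpl.
  - split; [intros H; exists []; auto|intros [cs [Hl H]]; destruct cs; simpl in *; auto; lia].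
  - split.
    + intros [c H]; apply IH in H; destruct H as [cs [Hl H]]; exists (c :: cs); simpl; auto.
    + intros [cs [Hl H]]; destruct cs as [|c cs]; simpl in Hl; try lia.
      exists c; apply IH; exists cs; split; auto.
Qed.

Lemma fv_ForallL z ys p : In z (fv (ForallL ys p)) -> In z (fv p) /\ ~ In z ys.
Proof.
  induction ys as [|y ys IH]; simpl; intros H; auto.
  apply in_remove in H; destruct H as [H1 H2]; apply IH in H1; intuition.
Qed.
Lemma fv_ExistsL z ys p : In z (fv (ExistsL ys p)) -> In z (fv p) /\ ~ In z ys.
Proof.
  induction ys as [|y ys IH]; simpl; intros H; auto.
  apply in_remove in H; destruct H as [H1 H2]; apply IH in H1; intuition.
Qed.

Definition Conj (l : list formula) := fold_right FAnd FTrue l.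
Lemma holds_Conj d v l : holds d v (Conj l) <-> forall p, In p l -> holds d v p.
Proof.
  induction l as [|p l IH]; simpl; [split; auto; intros _ _ []|].
  rewrite IH; split; [intros [H1 H2] q [<-|Hq]; auto|intros H; split; auto].
Qed.
Lemma fv_Conj z l : In z (fv (Conj l)) -> exists p, In p l /\ In z (fv p).
Proof.
  induction l as [|p l IH]; simpl; [intros []|].
  intros H; apply in_app_or in H; destruct H as [H|H]; [exists p; auto|].
  destruct (IH H) as [p' [? ?]]; exists p'; auto.
Qed.

Definition kmv (l key : list nat) : Prop := forall i, i < length key -> nth i l 0 = nth i key 0.
Definition kmb (l key : list nat) : bool :=
  forallb (fun i => Nat.eqb (nth i l 0) (nth i key 0)) (seq 0 (length key)).
Lemma kmb_iff l key : kmb l key = true <-> kmv l key.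
Proof.
  unfold kmb, kmv; rewrite forallb_forall; split.
  - intros H i Hi; apply Nat.eqb_eq, H, in_seq; lia.
  - intros H i Hi; apply in_seq in Hi; apply Nat.eqb_eq, H; lia.
Qed.

Definition KM (ts Kt : list term) : formula :=
  Conj (map (fun i => FEq (nth i ts (TCst 0)) (nth i Kt (TCst 0))) (seq 0 (length Kt))).

Lemma nth_map_eval v ts i : nth i (map (eval_term v) ts) 0 = eval_term v (nth i ts (TCst 0)).
Proof. exact (map_nth (eval_term v) ts (TCst 0) i). Qed.

Lemma holds_KM d v ts Kt : holds d v (KM ts Kt) <-> kmv (map (eval_term v) ts) (map (eval_term v) Kt).
Proof.
  unfold KM, kmv; rewrite holds_Conj, length_map; split.
  - intros H i Hi; rewrite !nth_map_eval.
    apply (H (FEq (nth i ts (TCst 0)) (nth i Kt (TCst 0)))).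
    apply in_map_iff; exists i; split; auto; apply in_seq; lia.
  - intros H p Hp; apply in_map_iff in Hp; destruct Hp as [i [<- Hi]]; apply in_seq in Hi.
    simpl; rewrite <- !nth_map_eval; apply H; lia.
Qed.

Lemma nth_vars z i ts : In z (term_vars (nth i ts (TCst 0))) -> In z (flat_map term_vars ts).
Proof.
  intros H; destruct (Nat.lt_ge_cases i (length ts)) as [Hl|Hl].
  - apply in_flat_map; exists (nth i ts (TCst 0)); split; auto; apply nth_In; auto.
  - rewrite nth_overflow in H by auto; destruct H.
Qed.

Lemma fv_KM z ts Kt : In z (fv (KM ts Kt)) -> In z (flat_map term_vars ts) \/ In z (flat_map term_vars Kt).
Proof.
  unfold KM; intros H; apply fv_Conj in H; destruct H as [p [Hp Hz]].
  apply in_map_iff in Hp; destruct Hp as [i [<- _]]; simpl in Hz.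
  apply in_app_or in Hz; destruct Hz as [Hz|Hz]; [left|right]; eapply nth_vars; eauto.
Qed.


Definition constr := (relname * list term * nat * term)%type.
Definition reqb (R1 R2 : relname) : bool := if relname_eq_dec R1 R2 then true else false.

Definition keep (dl : constr) (v : nat -> nat) (g : fact) : bool :=
  let '(R, Kt, j, t) := dl in
  negb (reqb (frel g) R && kmb (fargs g) (map (eval_term v) Kt)
        && negb (Nat.eqb (nth j (fargs g) 0) (eval_term v t))).
Definition keepAll (D : list constr) v g := forallb (fun dl => keep dl v g) D.
Definition del (D : list constr) v (d : db) : db := filter (keepAll D v) d.
Definition cvars (dl : constr) : list nat :=
  let '(R, Kt, j, t) := dl in flat_map term_vars Kt ++ term_vars t.
Definition dvars (D : list constr) : list nat := flat_map cvars D.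

Lemma keep_ext dl v v' g : (forall z, In z (cvars dl) -> v z = v' z) -> keep dl v g = keep dl v' g.
Proof.
  destruct dl as [[[R Kt] j] t]; simpl; intros H.
  rewrite (map_eval_ext v v' Kt), (eval_ext v v' t); auto;
  intros z Hz; apply H; apply in_or_app; auto.
Qed.

Lemma keepAll_ext D v v' g : (forall z, In z (dvars D) -> v z = v' z) -> keepAll D v g = keepAll D v' g.
Proof.
  induction D as [|dl D IH]; simpl; intros H; auto.
  rewrite (keep_ext dl v v'), IH; auto; intros z Hz; apply H; apply in_or_app; auto.
Qed.

Lemma in_del D v d g : In g (del D v d) <-> In g d /\ keepAll D v g = true.
Proof. unfold del; apply filter_In. Qed.

Lemma del_ext D v v' d g : (forall z, In z (dvars D) -> v z = v' z) ->
  (In g (del D v d) <-> In g (del D v' d)).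
Proof. intros H; rewrite !in_del, (keepAll_ext D v v'); tauto. Qed.

Lemma keep_iff R Kt j t v g : keep (R, Kt, j, t) v g = true <->
  ~ (frel g = R /\ kmv (fargs g) (map (eval_term v) Kt) /\ nth j (fargs g) 0 <> eval_term v t).
Proof.
  simpl; unfold reqb; rewrite <- kmb_iff.
  destruct (relname_eq_dec (frel g) R) as [e|n];
  destruct (kmb (fargs g) (map (eval_term v) Kt));
  destruct (Nat.eqb_spec (nth j (fargs g) 0) (eval_term v t)); simpl;
  split; intros; try tauto; try discriminate; try (exfalso; intuition congruence).
  all: intros [? [? ?]]; discriminate.
Qed.

Definition keepF (dl : constr) (R : relname) (ts : list term) : formula :=
  let '(R', Kt, j, t) := dl in
  if relname_eq_dec R R' then FNot (FAnd (KM ts Kt) (FNot (FEq (nth j ts (TCst 0)) t))) else FTrue.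

Lemma holds_keepF d v dl R ts : holds d v (keepF dl R ts) <-> keep dl v (Fact R (map (eval_term v) ts)) = true.
Proof.
  destruct dl as [[[R' Kt] j] t]. rewrite keep_iff. simpl.
  destruct (relname_eq_dec R R') as [e|n]; simpl.
  - rewrite holds_KM, <- nth_map_eval. split.
    + intros H [_ [H1 H2]]; apply H; split; auto.
    + intros H [H1 H2]; apply H; split; auto.
  - split; auto; intros _ [? _]; auto.
Qed.

Definition AtomD (D : list constr) (R : relname) (ts : list term) : formula :=
  FAnd (FAtom R ts) (Conj (map (fun dl => keepF dl R ts) D)).

Lemma holds_AtomD d v D R ts : holds d v (AtomD D R ts) <-> In (Fact R (map (eval_term v) ts)) (del D v d).
Proof.
  unfold AtomD; simpl; rewrite in_del, holds_Conj; unfold keepAll; rewrite forallb_forall.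
  split; intros [H1 H2]; split; auto.
  - intros dl Hd; apply (proj1 (holds_keepF d v dl R ts)), H2, in_map_iff; eauto.
  - intros p Hp; apply in_map_iff in Hp; destruct Hp as [dl [<- Hd]]; apply (proj2 (holds_keepF d v dl R ts)); auto.
Qed.

Lemma fv_AtomD z D R ts : In z (fv (AtomD D R ts)) -> In z (flat_map term_vars ts) \/ In z (dvars D).
Proof.
  unfold AtomD; simpl; intros H; apply in_app_or in H; destruct H as [H|H]; auto.
  apply fv_Conj in H; destruct H as [p [Hp Hz]]; apply in_map_iff in Hp; destruct Hp as [dl [<- Hd]].
  destruct dl as [[[R' Kt] j] t]; simpl in Hz; destruct (relname_eq_dec R R'); simpl in Hz; [|destruct Hz].
  apply in_app_or in Hz; destruct Hz as [Hz|Hz].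
  - apply fv_KM in Hz; destruct Hz as [Hz|Hz]; auto.
    right; apply in_flat_map; exists (R', Kt, j, t); split; auto; simpl; apply in_or_app; auto.
  - apply in_app_or in Hz; destruct Hz as [Hz|Hz]; [left; eapply nth_vars; eauto|].
    right; apply in_flat_map; exists (R', Kt, j, t); split; auto; simpl; apply in_or_app; auto.
Qed.

Lemma key_equal_sym f g : key_equal f g -> key_equal g f.
Proof. unfold key_equal; intros [H1 H2]; split; auto. Qed.
Lemma key_equal_trans f g h : key_equal f g -> key_equal g h -> key_equal f h.
Proof. unfold key_equal; intros [H1 H2] [H3 H4]; split; congruence. Qed.
Lemma key_equal_refl f : key_equal f f.
Proof. split; auto. Qed.
Definition key_equal_dec f g : {key_equal f g} + {~ key_equal f g}.
Proof.
  unfold key_equal; destruct (relname_eq_dec (frel f) (frel g)); [|right; tauto].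
  destruct (list_eq_dec Nat.eq_dec (firstn (rkey (frel f)) (fargs f)) (firstn (rkey (frel g)) (fargs g))); [left|right]; tauto.
Defined.

Definition covers (r d : db) := forall h, In h d -> exists g, In g r /\ key_equal g h.

Lemma repair_of r d : incl r d -> consistent r -> covers r d -> is_repair r d.
Proof.
  intros H1 H2 H3; split; [|split]; auto.
  intros r' Hr Hr' Hc h Hh.
  destruct (H3 h (Hr' h Hh)) as [g [Hg Hk]].
  rewrite <- (Hc g h (Hr g Hg) Hh Hk); auto.
Qed.

Lemma repair_covers r d : is_repair r d -> covers r d.
Proof.
  intros [H1 [H2 H3]] h Hh. apply NNPP; intros Hn.
  assert (Hin : In h r).
  { apply (H3 (h :: r)).
    - intros x Hx; simpl; auto.
    - intros x [<-|Hx]; auto.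
    - intros f g [<-|Hf] [<-|Hg] Hk; auto.
      + exfalso; apply Hn; exists g; split; auto; apply key_equal_sym; auto.
      + exfalso; apply Hn; exists f; split; auto.
    - simpl; auto. }
  apply Hn; exists h; split; auto; apply key_equal_refl.
Qed.

Lemma repair_iff r d : is_repair r d <-> incl r d /\ consistent r /\ covers r d.
Proof.
  split; [intros H; pose proof (repair_covers r d H); destruct H as [? [? _]]; auto|].
  intros [? [? ?]]; apply repair_of; auto.
Qed.

Fixpoint grow (r l : db) : db :=
  match l with
  | [] => r
  | f :: l' => grow (if existsb (fun g => if key_equal_dec g f then true else false) r then r else f :: r) l'
  end.

Lemma grow_props l : forall r, consistent r ->
  incl r (grow r l) /\ incl (grow r l) (r ++ l) /\ consistent (grow r l) /\ covers (grow r l) l.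
Proof.
  induction l as [|f l IH]; intros r Hc; simpl.
  - split; [apply incl_refl|split; [rewrite app_nil_r; apply incl_refl|split; auto]].
    intros h [].
  - destruct (existsb (fun g => if key_equal_dec g f then true else false) r) eqn:E.
    + destruct (IH r Hc) as [H1 [H2 [H3 H4]]]; split; [|split; [|split]]; auto.
      * intros x Hx; apply H2 in Hx; apply in_app_or in Hx; apply in_or_app; simpl; tauto.
      * intros h [<-|Hh]; auto.
        apply existsb_exists in E; destruct E as [g [Hg E]].
        destruct (key_equal_dec g f); [|discriminate]. exists g; auto.
    + assert (Hc' : consistent (f :: r)).
      { intros x y Hx Hy Hk; destruct Hx as [Hx|Hx]; [subst x|]; destruct Hy as [Hy|Hy]; [subst y| |subst y|]; auto.
        - exfalso. assert (existsb (fun g => if key_equal_dec g f then true else false) r = true) as E'.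
          { apply existsb_exists; exists y; split; auto. destruct (key_equal_dec y f); auto.
            exfalso; apply n, key_equal_sym; auto. }
          congruence.
        - exfalso. assert (existsb (fun g => if key_equal_dec g f then true else false) r = true) as E'.
          { apply existsb_exists; exists x; split; auto. destruct (key_equal_dec x f); auto. }
          congruence. }
      destruct (IH (f :: r) Hc') as [H1 [H2 [H3 H4]]]; split; [|split; [|split]]; auto.
      * intros x Hx; apply H1; simpl; auto.
      * intros x Hx; apply H2 in Hx; simpl in Hx; apply in_or_app; simpl.
        destruct Hx as [<-|Hx]; auto. apply in_app_or in Hx; tauto.
      * intros h [<-|Hh]; auto. exists f; split; [apply H1; simpl; auto|apply key_equal_refl].
Qed.

Lemma repair_extend s d : consistent s -> incl s d -> exists r, is_repair r d /\ incl s r.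
Proof.
  intros Hc Hi. destruct (grow_props d s Hc) as [H1 [H2 [H3 H4]]].
  exists (grow s d); split; auto. apply repair_of; auto.
  intros x Hx; apply H2 in Hx; apply in_app_or in Hx; destruct Hx; auto.
Qed.

Lemma repair_exists d : exists r, is_repair r d.
Proof.
  destruct (repair_extend [] d) as [r [H _]]; eauto.
  - intros f g [].
  - intros x [].
Qed.


Definition certainV (q : query) (X : list nat) (v : nat -> nat) (d : db) : Prop :=
  forall r, is_repair r d -> exists w, (forall y, In y X -> w y = v y) /\
    (forall A, In A q -> In (ground w A) r).

Lemma certainV_ext q X v v' d : (forall y, In y X -> v y = v' y) ->
  (certainV q X v d <-> certainV q X v' d).
Proof.
  intros H; unfold certainV; split; intros Hc r Hr; destruct (Hc r Hr) as [w [H1 H2]];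
  exists w; split; auto; intros y Hy; rewrite H1; auto; symmetry; auto.
Qed.

Lemma repair_db r d1 d2 : (forall g, In g d1 <-> In g d2) -> (is_repair r d1 <-> is_repair r d2).
Proof.
  intros H; rewrite !repair_iff; unfold incl, covers.
  split; intros [H1 [H2 H3]]; (split; [|split]); auto.
  - intros a Ha; apply H; auto.
  - intros h Hh; apply H3, H; auto.
  - intros a Ha; apply H; auto.
  - intros h Hh; apply H3, H; auto.
Qed.

Lemma certainV_db q X v d1 d2 : (forall g, In g d1 <-> In g d2) ->
  (certainV q X v d1 <-> certainV q X v d2).
Proof.
  intros H; unfold certainV; split; intros Hc r Hr; apply Hc; eapply repair_db; eauto.
  intros g; rewrite H; tauto.
Qed.

Lemma certainV_q q1 q2 X v d : (forall A, In A q1 <-> In A q2) ->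
  (certainV q1 X v d <-> certainV q2 X v d).
Proof.
  intros H; unfold certainV; split; intros Hc r Hr; destruct (Hc r Hr) as [w [H1 H2]];
  exists w; split; auto; intros A HA; apply H2, H; auto.
Qed.

Lemma certainV_nil X v d : certainV [] X v d.
Proof. intros r _; exists v; split; auto; intros A []. Qed.

Lemma se2 q q1 q2 X v d : (forall A, In A q <-> In A q1 \/ In A q2) ->
  (forall z, In z (qvars q1) -> In z (qvars q2) -> In z X) ->
  (certainV q X v d <-> certainV q1 X v d /\ certainV q2 X v d).
Proof.
  intros Hs Hv; unfold certainV; split.
  - intros Hc; split; intros r Hr; destruct (Hc r Hr) as [w [H1 H2]]; exists w; split; auto;
    intros A HA; apply H2, Hs; auto.
  - intros [Hc1 Hc2] r Hr. destruct (Hc1 r Hr) as [w1 [H11 H12]]; destruct (Hc2 r Hr) as [w2 [H21 H22]].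
    exists (fun z => if in_dec Nat.eq_dec z (qvars q1) then w1 z else w2 z); split.
    + intros y Hy; destruct (in_dec Nat.eq_dec y (qvars q1)); auto.
    + intros A HA; apply Hs in HA; destruct HA as [HA|HA].
      * rewrite (ground_ext _ w1); auto. intros z Hz.
        destruct (in_dec Nat.eq_dec z (qvars q1)) as [_|n]; auto.
        exfalso; apply n, in_flat_map; eauto.
      * rewrite (ground_ext _ w2); auto. intros z Hz.
        destruct (in_dec Nat.eq_dec z (qvars q1)) as [i|n]; auto.
        assert (In z X) by (apply Hv; auto; apply in_flat_map; eauto).
        rewrite H11, H21; auto.
Qed.

Fixpoint idx (t : term) (l : list term) : nat :=
  match l with [] => 0 | h :: l' => if term_eq_dec h t then 0 else S (idx t l') end.

Lemma idx_spec t l : In t l -> idx t l < length l /\ nth (idx t l) l (TCst 0) = t.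
Proof.
  induction l as [|h l IH]; simpl; [intros []|].
  destruct (term_eq_dec h t); [split; auto; lia|].
  intros [->|H]; [congruence|]. destruct (IH H); split; auto; lia.
Qed.

Lemma nth_firstn_lt {T} n (l : list T) i (dd : T) : i < n -> nth i (firstn n l) dd = nth i l dd.
Proof. intros H; rewrite nth_firstn; apply Nat.ltb_lt in H; rewrite H; auto. Qed.

Section SE3.
Variable (q : query) (x : nat).

Definition findA (R : relname) : option atom :=
  find (fun A => if relname_eq_dec (arel A) R then true else false) q.
Definition pos (R : relname) : nat :=
  match findA R with Some A => idx (TVar x) (firstn (rkey R) (aargs A)) | None => 0 end.
Definition cf (f : fact) : nat :=
  if pos (frel f) <? rkey (frel f) then nth (pos (frel f)) (fargs f) 0 else 0.

Lemma cf_keq f g : key_equal f g -> cf f = cf g.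
Proof.
  unfold key_equal, cf; intros [H1 H2]; rewrite <- H1 in *.
  destruct (Nat.ltb_spec (pos (frel f)) (rkey (frel f))) as [Hl|Hl]; auto.
  rewrite <- (nth_firstn_lt _ _ _ _ Hl), H2, nth_firstn_lt; auto; congruence.
Qed.

Lemma cf_ground w A : self_join_free q -> In A q -> In x (akey A) -> cf (ground w A) = w x.
Proof.
  intros Hs HA Hx. unfold cf, ground; simpl. unfold pos.
  destruct (findA (arel A)) as [A'|] eqn:E.
  2:{ unfold findA in E. eapply find_none in E; eauto.
      destruct (relname_eq_dec (arel A) (arel A)); congruence. }
  unfold findA in E. pose proof (find_some _ _ E) as [HA' HR].
  destruct (relname_eq_dec (arel A') (arel A)) as [e|]; [|discriminate].
  assert (A' = A) as -> by (apply Hs; auto).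
  unfold akey in Hx; apply in_vars_iff in Hx.
  destruct (idx_spec _ _ Hx) as [H1 H2].
  rewrite length_firstn in H1.
  assert (Hp : idx (TVar x) (firstn (rkey (arel A)) (aargs A)) < rkey (arel A)) by lia.
  apply Nat.ltb_lt in Hp; rewrite Hp. apply Nat.ltb_lt in Hp.
  rewrite nth_map_eval. rewrite nth_firstn_lt in H2 by auto. rewrite H2; reflexivity.
Qed.
End SE3.

Lemma se3 q X x v d : self_join_free q -> (forall A, In A q -> In x (akey A)) -> ~ In x X ->
  (certainV q X v d <-> exists c, certainV q (x :: X) (upd v x c) d).
Proof.
  intros Hs Hk Hx; split.
  - intros Hc; apply NNPP; intros Hn.
    assert (H : forall c, exists r, is_repair r d /\ ~ exists w, (forall y, In y (x :: X) -> w y = upd v x c y) /\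
      (forall A, In A q -> In (ground w A) r)).
    { intros c; apply NNPP; intros Hnr; apply Hn; exists c; intros r Hr.
      apply NNPP; intros Hw; apply Hnr; exists r; auto. }
    assert (HF : exists F : nat -> db, forall c, is_repair (F c) d /\ ~ exists w, (forall y, In y (x :: X) -> w y = upd v x c y) /\
      (forall A, In A q -> In (ground w A) (F c))).
    { exists (fun c => proj1_sig (constructive_indefinite_description _ (H c))).
      intros c; exact (proj2_sig (constructive_indefinite_description _ (H c))). }
    destruct HF as [F HF].
    set (r := filter (fun f => if in_dec fact_eq_dec f (F (cf q x f)) then true else false) d).
    assert (Hr : is_repair r d).
    { apply repair_of.
      - intros f Hf; apply filter_In in Hf; tauto.
      - intros f g Hf Hg Hfg; apply filter_In in Hf; apply filter_In in Hg.
        destruct Hf as [_ Hf]; destruct Hg as [_ Hg].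
        destruct (in_dec fact_eq_dec f (F (cf q x f))) as [i1|]; [|discriminate].
        destruct (in_dec fact_eq_dec g (F (cf q x g))) as [i2|]; [|discriminate].
        rewrite (cf_keq q x f g Hfg) in i1.
        destruct (HF (cf q x g)) as [[_ [Hc' _]] _]; auto.
      - intros h Hh. destruct (HF (cf q x h)) as [Hrep _].
        destruct (repair_covers _ _ Hrep h Hh) as [g [Hg Hgh]].
        exists g; split; auto. apply filter_In; split.
        + destruct Hrep as [Hi _]; apply Hi; auto.
        + rewrite (cf_keq q x g h Hgh). destruct (in_dec fact_eq_dec g (F (cf q x h))); auto. }
    destruct (Hc r Hr) as [w [Hw1 Hw2]].
    destruct (HF (w x)) as [_ Hno]; apply Hno; exists w; split.
    + intros y [<-|Hy]; [rewrite upd_eq; auto|].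
      rewrite upd_neq; auto; intros ->; auto.
    + intros A HA. specialize (Hw2 A HA). apply filter_In in Hw2; destruct Hw2 as [_ Hw2].
      rewrite (cf_ground q x w A Hs HA (Hk A HA)) in Hw2.
      destruct (in_dec fact_eq_dec (ground w A) (F (w x))); auto; discriminate.
  - intros [c Hc] r Hr; destruct (Hc r Hr) as [w [H1 H2]]; exists w; split; auto.
    intros y Hy; rewrite H1 by (simpl; auto); apply upd_neq; intros ->; auto.
Qed.


Lemma kmv_firstn k l1 l2 : k <= length l1 -> length l2 = k -> (firstn k l1 = l2 <-> kmv l1 l2).
Proof.
  intros H1 H2; split.
  - intros <- i Hi; rewrite length_firstn in Hi; rewrite nth_firstn_lt; auto; lia.
  - intros Hk; apply (nth_ext _ _ 0 0); [rewrite length_firstn; lia|].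
    intros i Hi; rewrite length_firstn in Hi; rewrite nth_firstn_lt by lia; apply Hk; lia.
Qed.

Lemma kmv_eq l1 l2 : length l1 = length l2 -> (l1 = l2 <-> kmv l1 l2).
Proof.
  intros H; rewrite <- (kmv_firstn (length l2) l1 l2) by lia.
  rewrite <- H, firstn_all; tauto.
Qed.

Lemma max_ge z X : In z X -> z <= list_max X.
Proof. intros H; pose proof (proj1 (list_max_le X (list_max X)) (le_n _)) as F; rewrite Forall_forall in F; auto. Qed.

Lemma fresh_seq z X m : In z X -> ~ In z (seq (S (list_max X)) m).
Proof. intros H H'; apply in_seq in H'; apply max_ge in H; lia. Qed.

Lemma map_eval_TVar u ys : map (eval_term u) (map TVar ys) = map u ys.
Proof. rewrite map_map; reflexivity. Qed.

Lemma vars_TVar z ys : In z (flat_map term_vars (map TVar ys)) -> In z ys.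
Proof. intros H; apply in_vars_iff, in_map_iff in H; destruct H as [y [E H]]; congruence. Qed.

Lemma wf_fact_eta g : g = Fact (frel g) (fargs g).
Proof. destruct g; auto. Qed.

Lemma in_firstn {T} k (l : list T) y : In y (firstn k l) -> In y l.
Proof. intros H; rewrite <- (firstn_skipn k l); apply in_or_app; auto. Qed.

Lemma akey_avars z A : In z (akey A) -> In z (avars A).
Proof. unfold akey, avars; rewrite !in_vars_iff; apply in_firstn. Qed.

Lemma se1_sem A0 X v d0 : wf_db d0 -> wf_atom A0 -> (forall z, In z (avars A0) -> In z X) ->
  (certainV [A0] X v d0 <-> In (ground v A0) d0 /\
     forall g, In g d0 -> frel g = arel A0 ->
       kmv (fargs g) (map (eval_term v) (firstn (rkey (arel A0)) (aargs A0))) ->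
       kmv (fargs g) (map (eval_term v) (aargs A0))).
Proof.
  intros Hd [[Hk1 Hk2] Hl] HX.
  assert (Hgr : forall w, (forall y, In y X -> w y = v y) -> ground w A0 = ground v A0).
  { intros w Hw; apply ground_ext; intros z Hz; apply Hw, HX; auto. }
  assert (Hlen : length (map (eval_term v) (firstn (rkey (arel A0)) (aargs A0))) = rkey (arel A0)).
  { rewrite length_map, length_firstn; lia. }
  assert (Hwf : forall g, In g d0 -> length (fargs g) = rarity (frel g) /\ rkey (frel g) <= rarity (frel g)).
  { intros g Hg; unfold wf_db in Hd; rewrite Forall_forall in Hd; destruct (Hd g Hg) as [[? ?] ?]; auto. }
  split.
  - intros Hc. destruct (repair_exists d0) as [r0 Hr0].
    destruct (Hc r0 Hr0) as [w [Hw1 Hw2]]. pose proof (Hw2 A0 (or_introl eq_refl)) as Hw. rewrite Hgr in Hw by auto.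
    assert (Hf : In (ground v A0) d0) by (destruct Hr0 as [Hi _]; apply Hi; auto).
    split; auto. intros g Hg HR Hkm.
    destruct (repair_extend [g] d0) as [r [Hr Hgr']].
    + intros a b [<-|[]] [<-|[]] _; auto.
    + intros a [<-|[]]; auto.
    + destruct (Hc r Hr) as [w' [Hw1' Hw2']]. pose proof (Hw2' A0 (or_introl eq_refl)) as Hw'. rewrite Hgr in Hw' by auto.
      destruct Hr as [_ [Hcons _]].
      assert (E : g = ground v A0).
      { apply Hcons; [apply Hgr'; simpl; auto|apply Hw'|].
        split; [simpl; auto|]. simpl. rewrite HR. rewrite firstn_map.
        destruct (Hwf g Hg) as [Hg1 Hg2].
        apply kmv_firstn; auto; try lia. rewrite Hg1, HR; lia. }
      rewrite E; simpl. intros i _; auto.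
  - intros [Hf Hall] r Hr. exists v; split; auto. intros A [<-|[]].
    destruct (repair_covers r d0 Hr (ground v A0) Hf) as [g [Hg Hke]].
    destruct Hr as [Hi _]. assert (Hg0 : In g d0) by auto.
    destruct Hke as [HR Hfk]. simpl in HR, Hfk. rewrite HR in Hfk.
    destruct (Hwf g Hg0) as [Hg1 Hg2].
    assert (Hk : kmv (fargs g) (map (eval_term v) (firstn (rkey (arel A0)) (aargs A0)))).
    { apply (proj1 (kmv_firstn (rkey (arel A0)) _ _ ltac:(rewrite Hg1, HR; lia) Hlen)).
      rewrite Hfk, firstn_map; auto. }
    specialize (Hall g Hg0 HR Hk). apply kmv_eq in Hall; [|rewrite length_map, Hg1, HR; auto].
    replace (ground v A0) with g; auto.
    rewrite (wf_fact_eta g), HR, Hall; reflexivity.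
Qed.

Lemma se4_sem q X x v d0 A j :
  wf_db d0 -> wf_query q -> self_join_free q -> In A q ->
  (forall z, In z (akey A) -> In z X) -> ~ In x X ->
  nth j (aargs A) (TCst 0) = TVar x ->
  (certainV q X v d0 <->
    (exists g, In g d0 /\ frel g = arel A /\
        kmv (fargs g) (map (eval_term v) (firstn (rkey (arel A)) (aargs A)))) /\
    forall g, In g d0 -> frel g = arel A ->
      kmv (fargs g) (map (eval_term v) (firstn (rkey (arel A)) (aargs A))) ->
      certainV q (x :: X) (upd v x (nth j (fargs g) 0))
        (filter (keep (arel A, firstn (rkey (arel A)) (aargs A), j, TVar x) (upd v x (nth j (fargs g) 0))) d0)).
Proof.
  intros Hd Hq Hs HA HkX Hx Hj.
  assert (HwA : wf_atom A) by (unfold wf_query in Hq; rewrite Forall_forall in Hq; auto).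
  destruct HwA as [[Hk1 Hk2] Hl].
  set (R := arel A) in *. set (Kt := firstn (rkey R) (aargs A)).
  set (K := map (eval_term v) Kt).
  assert (HKl : length K = rkey R) by (unfold K, Kt; rewrite length_map, length_firstn; lia).
  assert (Hwf : forall g, In g d0 -> length (fargs g) = rarity (frel g) /\ rkey (frel g) <= rarity (frel g)).
  { intros g Hg; unfold wf_db in Hd; rewrite Forall_forall in Hd; destruct (Hd g Hg) as [[? ?] ?]; auto. }
  assert (HinB_keq : forall g h, In g d0 -> In h d0 -> frel g = R -> kmv (fargs g) K ->
            frel h = R -> kmv (fargs h) K -> key_equal g h).
  { intros g h Hg Hh Hrg Hkg Hrh Hkh; split; [congruence|].
    destruct (Hwf g Hg) as [Hg1 _]; destruct (Hwf h Hh) as [Hh1 _].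
    rewrite Hrg, Hrh.
    rewrite (proj2 (kmv_firstn (rkey R) (fargs g) K ltac:(rewrite Hg1, Hrg; lia) HKl) Hkg).
    rewrite (proj2 (kmv_firstn (rkey R) (fargs h) K ltac:(rewrite Hh1, Hrh; lia) HKl) Hkh); auto. }
  assert (HkeqB : forall g h, In g d0 -> key_equal g h -> frel h = R -> In h d0 -> kmv (fargs h) K ->
            frel g = R /\ kmv (fargs g) K).
  { intros g h Hg [H1 H2] Hrh Hh Hkh. split; [congruence|].
    destruct (Hwf g Hg) as [Hg1 _]; destruct (Hwf h Hh) as [Hh1 _].
    rewrite H1, Hrh in H2.
    rewrite (proj2 (kmv_firstn (rkey R) (fargs h) K ltac:(rewrite Hh1, Hrh; lia) HKl) Hkh) in H2.
    apply (proj1 (kmv_firstn (rkey R) (fargs g) K ltac:(rewrite Hg1, H1, Hrh; lia) HKl)); auto. }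
  assert (Hgr : forall w, (forall y, In y X -> w y = v y) ->
            frel (ground w A) = R /\ kmv (fargs (ground w A)) K /\ nth j (fargs (ground w A)) 0 = w x).
  { intros w Hw; simpl; split; auto; split.
    - apply (proj1 (kmv_firstn (rkey R) (map (eval_term w) (aargs A)) K ltac:(rewrite length_map; lia) HKl)).
      unfold K, Kt; rewrite firstn_map; apply map_eval_ext.
      intros z Hz; apply Hw, HkX; exact Hz.
    - rewrite nth_map_eval, Hj; reflexivity. }
  assert (Hkeep : forall c g, keep (R, Kt, j, TVar x) (upd v x c) g = true <->
            ~ (frel g = R /\ kmv (fargs g) K /\ nth j (fargs g) 0 <> c)).
  { intros c g; rewrite keep_iff.
    replace (map (eval_term (upd v x c)) Kt) with K; [simpl; rewrite upd_eq; tauto|].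
    unfold K; apply map_eval_ext; intros z Hz; symmetry; apply upd_neq.
    intros ->; apply Hx, HkX; exact Hz. }
  split.
  - intros Hc; split.
    + destruct (repair_exists d0) as [r0 Hr0]. destruct (Hc r0 Hr0) as [w [Hw1 Hw2]].
      destruct (Hgr w Hw1) as [G1 [G2 _]].
      exists (ground w A); split; auto. destruct Hr0 as [Hi _]; apply Hi, Hw2; auto.
    + intros g Hg Hrg Hkg. set (c := nth j (fargs g) 0).
      intros r Hr. apply repair_iff in Hr; destruct Hr as [Hri [Hrc Hrcov]].
      assert (Hgc : In g (filter (keep (R, Kt, j, TVar x) (upd v x c)) d0)).
      { apply filter_In; split; auto; apply Hkeep; tauto. }
      assert (Hr0 : is_repair r d0).
      { apply repair_iff; split; [|split]; auto.
        - intros a Ha; apply Hri in Ha; apply filter_In in Ha; tauto.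
        - intros h Hh. destruct (keep (R, Kt, j, TVar x) (upd v x c) h) eqn:E.
          + apply Hrcov, filter_In; auto.
          + assert (Hb : frel h = R /\ kmv (fargs h) K /\ nth j (fargs h) 0 <> c).
            { apply NNPP; intros Hn; apply Hkeep in Hn; congruence. }
            destruct (Hrcov g Hgc) as [g' [Hg' Hk']]. exists g'; split; auto.
            apply (key_equal_trans _ g); auto. apply HinB_keq; tauto. }
      destruct (Hc r Hr0) as [w [Hw1 Hw2]]. exists w; split; auto.
      intros y [<-|Hy].
      * rewrite upd_eq. destruct (Hgr w Hw1) as [G1 [G2 G3]].
        pose proof (Hri _ (Hw2 A HA)) as Hin. apply filter_In in Hin; destruct Hin as [_ Hin].
        apply Hkeep in Hin. rewrite <- G3. apply NNPP; intros Hn; apply Hin; auto.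
      * rewrite upd_neq by (intros ->; auto). auto.
  - intros [[g0 [Hg0 [Hrg0 Hkg0]]] Hall] r Hr.
    destruct (repair_covers r d0 Hr g0 Hg0) as [f [Hf Hfk]].
    pose proof Hr as Hr'. destruct Hr' as [Hri [Hrc _]].
    assert (Hfd : In f d0) by auto.
    destruct (HkeqB f g0 Hfd Hfk Hrg0 Hg0 Hkg0) as [Hrf Hkf].
    set (c := nth j (fargs f) 0).
    assert (Hrc' : is_repair r (filter (keep (R, Kt, j, TVar x) (upd v x c)) d0)).
    { apply repair_iff; split; [|split]; auto.
      - intros h Hh. apply filter_In; split; auto. apply Hkeep; intros [H1 [H2 H3]].
        assert (h = f) as -> by (apply Hrc; auto; apply HinB_keq; auto).
        apply H3; reflexivity.
      - intros h Hh; apply filter_In in Hh; apply (repair_covers r d0 Hr); tauto. }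
    destruct (Hall f Hfd Hrf Hkf r Hrc') as [w [Hw1 Hw2]].
    exists w; split; auto. intros y Hy. rewrite Hw1 by (simpl; auto). apply upd_neq; intros ->; auto.
Qed.


Lemma wf_del D v d : wf_db d -> wf_db (del D v d).
Proof. unfold wf_db; rewrite !Forall_forall; intros H g Hg; apply in_del in Hg; apply H; tauto. Qed.

Lemma wf_filter p d : wf_db d -> wf_db (filter p d).
Proof. unfold wf_db; rewrite !Forall_forall; intros H g Hg; apply filter_In in Hg; apply H; tauto. Qed.

Lemma holds_FAnd d v p q : holds d v (FAnd p q) <-> holds d v p /\ holds d v q.
Proof. reflexivity. Qed.
Lemma holds_FOr d v p q : holds d v (FOr p q) <-> holds d v p \/ holds d v q.
Proof. reflexivity. Qed.
Lemma holds_FNot d v p : holds d v (FNot p) <-> ~ holds d v p.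
Proof. reflexivity. Qed.

Lemma holds_blockAll d v D R Kt ys X psi :
  wf_db d -> NoDup ys -> length ys = rarity R ->
  (forall z, In z (flat_map term_vars Kt) -> In z X) -> (forall z, In z (dvars D) -> In z X) ->
  (forall z, In z X -> ~ In z ys) ->
  (holds d v (ForallL ys (FOr (FNot (FAnd (AtomD D R (map TVar ys)) (KM (map TVar ys) Kt))) psi)) <->
   forall g, In g (del D v d) -> frel g = R -> kmv (fargs g) (map (eval_term v) Kt) ->
     holds d (upds v ys (fargs g)) psi).
Proof.
  intros Hd Hn Hl HK HD Hf. rewrite holds_ForallL.
  assert (Hdw := wf_del D v d Hd).
  assert (E : forall cs, length cs = length ys ->
     (holds d (upds v ys cs) (FAnd (AtomD D R (map TVar ys)) (KM (map TVar ys) Kt)) <->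
      In (Fact R cs) (del D v d) /\ kmv cs (map (eval_term v) Kt))).
  { intros cs Hc; rewrite holds_FAnd, holds_AtomD, holds_KM, !map_eval_TVar, upds_map by auto.
    rewrite (del_ext D (upds v ys cs) v).
    - rewrite (map_eval_ext (upds v ys cs) v Kt); [tauto|].
      intros z Hz; apply upds_notin; apply Hf, HK; auto.
    - intros z Hz; apply upds_notin; apply Hf, HD; auto. }
  split.
  - intros H g Hg Hr Hk.
    assert (Hgl : length (fargs g) = length ys).
    { unfold wf_db in Hdw; rewrite Forall_forall in Hdw; destruct (Hdw g Hg) as [_ L]; congruence. }
    specialize (H (fargs g) Hgl); simpl in H; destruct H as [H|H]; auto.
    exfalso; apply H, E; auto. rewrite <- Hr, <- wf_fact_eta; auto.
  - intros H cs Hc; simpl. destruct (classic (holds d (upds v ys cs) (FAnd (AtomD D R (map TVar ys)) (KM (map TVar ys) Kt)))) as [Y|N]; auto.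
    right. apply E in Y; auto. destruct Y as [Y1 Y2]. apply (H _ Y1); auto.
Qed.

Lemma holds_blockEx d v D R Kt ys X :
  wf_db d -> NoDup ys -> length ys = rarity R ->
  (forall z, In z (flat_map term_vars Kt) -> In z X) -> (forall z, In z (dvars D) -> In z X) ->
  (forall z, In z X -> ~ In z ys) ->
  (holds d v (ExistsL ys (FAnd (AtomD D R (map TVar ys)) (KM (map TVar ys) Kt))) <->
   exists g, In g (del D v d) /\ frel g = R /\ kmv (fargs g) (map (eval_term v) Kt)).
Proof.
  intros Hd Hn Hl HK HD Hf. rewrite holds_ExistsL.
  assert (Hdw := wf_del D v d Hd).
  assert (E : forall cs, length cs = length ys ->
     (holds d (upds v ys cs) (FAnd (AtomD D R (map TVar ys)) (KM (map TVar ys) Kt)) <->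
      In (Fact R cs) (del D v d) /\ kmv cs (map (eval_term v) Kt))).
  { intros cs Hc; rewrite holds_FAnd, holds_AtomD, holds_KM, !map_eval_TVar, upds_map by auto.
    rewrite (del_ext D (upds v ys cs) v).
    - rewrite (map_eval_ext (upds v ys cs) v Kt); [tauto|].
      intros z Hz; apply upds_notin; apply Hf, HK; auto.
    - intros z Hz; apply upds_notin; apply Hf, HD; auto. }
  split.
  - intros [cs [Hc H]]; apply E in H; auto; destruct H; exists (Fact R cs); simpl; auto.
  - intros [g [Hg [Hr Hk]]].
    assert (Hgl : length (fargs g) = length ys).
    { unfold wf_db in Hdw; rewrite Forall_forall in Hdw; destruct (Hdw g Hg) as [_ L]; congruence. }
    exists (fargs g); split; auto; apply E; auto. rewrite <- Hr, <- wf_fact_eta; auto.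
Qed.


Definition substX_term (X : list nat) (a : nat) (t : term) : term :=
  match t with TVar y => if in_dec Nat.eq_dec y X then TCst a else TVar y | TCst c => TCst c end.
Definition substX_atom X a (A : atom) : atom := Atom (arel A) (map (substX_term X a) (aargs A)).
Definition substX X a (q : query) : query := map (substX_atom X a) q.

Lemma vars_substX z X a ts : In z (flat_map term_vars (map (substX_term X a) ts)) <->
  In z (flat_map term_vars ts) /\ ~ In z X.
Proof.
  rewrite !in_vars_iff, in_map_iff; split.
  - intros [t [Ht Hin]]; destruct t as [y|c]; simpl in Ht; [|discriminate].
    destruct (in_dec Nat.eq_dec y X); [discriminate|]. inversion Ht; subst; auto.
  - intros [H1 H2]; exists (TVar z); split; auto; simpl; destruct (in_dec Nat.eq_dec z X); tauto.
Qed.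

Lemma akey_substX z X a A : In z (akey (substX_atom X a A)) <-> In z (akey A) /\ ~ In z X.
Proof. unfold akey, substX_atom; simpl; rewrite firstn_map; apply vars_substX. Qed.
Lemma avars_substX z X a A : In z (avars (substX_atom X a A)) <-> In z (avars A) /\ ~ In z X.
Proof. unfold avars, substX_atom; simpl; apply vars_substX. Qed.
Lemma qvars_substX z X a q : In z (qvars (substX X a q)) <-> In z (qvars q) /\ ~ In z X.
Proof.
  unfold qvars, substX; rewrite !in_flat_map; split.
  - intros [A' [HA Hz]]; apply in_map_iff in HA; destruct HA as [A [<- HA]].
    apply avars_substX in Hz; destruct Hz; split; eauto.
  - intros [[A [HA Hz]] Hx]; exists (substX_atom X a A); split; [apply in_map; auto|apply avars_substX; auto].
Qed.

Lemma qvars_same z q1 q2 : (forall G, In G q1 <-> In G q2) -> (In z (qvars q1) <-> In z (qvars q2)).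
Proof. intros H; unfold qvars; rewrite !in_flat_map; split; intros [A [HA Hz]]; exists A; split; auto; apply H; auto. Qed.

Lemma subst_substX x a X q : subst x a (substX X a q) = substX (x :: X) a q.
Proof.
  unfold subst, substX; rewrite map_map; apply map_ext; intros A.
  unfold subst_atom, substX_atom; simpl; f_equal; rewrite map_map; apply map_ext; intros t.
  destruct t as [y|c]; simpl; auto.
  destruct (in_dec Nat.eq_dec y X) as [i|n]; simpl.
  - destruct (Nat.eq_dec x y); auto.
  - destruct (Nat.eqb_spec y x) as [->|ne].
    + destruct (Nat.eq_dec x x); [auto|congruence].
    + destruct (Nat.eq_dec x y); [congruence|]. destruct (in_dec Nat.eq_dec y X); tauto.
Qed.

Lemma substX_nil a q : substX [] a q = q.
Proof.
  unfold substX; rewrite <- (map_id q) at 2; apply map_ext; intros [R ts]; unfold substX_atom; simpl.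
  f_equal; rewrite <- (map_id ts) at 2; apply map_ext; intros [y|c]; auto.
Qed.

Lemma wf_query_filter p q : wf_query q -> wf_query (filter p q).
Proof. unfold wf_query; rewrite !Forall_forall; intros H A HA; apply filter_In in HA; apply H; tauto. Qed.
Lemma sjf_filter p q : self_join_free q -> self_join_free (filter p q).
Proof. intros H A B HA HB; apply filter_In in HA; apply filter_In in HB; apply H; tauto. Qed.

Definition ysOf (X : list nat) (m : nat) := seq (S (list_max X)) m.

Lemma vars_Kt z k ts : In z (flat_map term_vars (firstn k ts)) -> In z (flat_map term_vars ts).
Proof. rewrite !in_vars_iff; apply in_firstn. Qed.

Definition phi1 (D : list constr) (A0 : atom) (X : list nat) : formula :=
  let R := arel A0 in let ts := aargs A0 in let Kt := firstn (rkey R) ts in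
  let ys := ysOf X (rarity R) in
  FAnd (AtomD D R ts)
    (ForallL ys (FOr (FNot (FAnd (AtomD D R (map TVar ys)) (KM (map TVar ys) Kt))) (KM (map TVar ys) ts))).

Lemma phi1_ok D A0 X : wf_atom A0 -> (forall z, In z (avars A0) -> In z X) ->
  (forall z, In z (dvars D) -> In z X) ->
  (forall z, In z (fv (phi1 D A0 X)) -> In z X) /\
  forall d v, wf_db d -> (holds d v (phi1 D A0 X) <-> certainV [A0] X v (del D v d)).
Proof.
  intros HA HX HD. unfold phi1.
  set (R := arel A0); set (ts := aargs A0); set (Kt := firstn (rkey R) ts); set (ys := ysOf X (rarity R)).
  assert (Hfr : forall z, In z X -> ~ In z ys) by (intros z Hz; apply fresh_seq; auto).
  split.
  - intros z Hz. simpl in Hz. apply in_app_or in Hz; destruct Hz as [Hz|Hz].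
    + apply fv_AtomD in Hz; destruct Hz; auto.
    + apply fv_ForallL in Hz; destruct Hz as [Hz Hn]. simpl in Hz.
      idtac.
      apply in_app_or in Hz; destruct Hz as [Hz|Hz]; [apply in_app_or in Hz; destruct Hz as [Hz|Hz]|].
      * apply fv_AtomD in Hz; destruct Hz as [Hz|Hz]; auto. apply vars_TVar in Hz; tauto.
      * apply fv_KM in Hz; destruct Hz as [Hz|Hz]; [apply vars_TVar in Hz; tauto|apply HX; eapply vars_Kt; eauto].
      * apply fv_KM in Hz; destruct Hz as [Hz|Hz]; [apply vars_TVar in Hz; tauto|apply HX; auto].
  - intros d v Hd.
    assert (Hts : forall z, In z (flat_map term_vars ts) -> In z X) by exact HX.
    assert (HKt : forall z, In z (flat_map term_vars Kt) -> In z X) by (intros z Hz; apply Hts; eapply vars_Kt; eauto).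
    rewrite holds_FAnd, holds_AtomD, (holds_blockAll d v D R Kt ys X); auto;
      [|apply seq_NoDup|unfold ys, ysOf; apply length_seq].
    rewrite (se1_sem A0 X v (del D v d) (wf_del D v d Hd) HA HX).
    fold R ts Kt. unfold ground; fold R ts.
    assert (Hdw := wf_del D v d Hd).
    apply and_iff_compat_l. split; intros H g Hg Hr Hk; specialize (H g Hg Hr Hk).
    + assert (Hgl : length (fargs g) = length ys).
      { unfold wf_db in Hdw; rewrite Forall_forall in Hdw; destruct (Hdw g Hg) as [_ L].
        unfold ys, ysOf; rewrite length_seq; congruence. }
      rewrite holds_KM, map_eval_TVar, upds_map in H; auto; [|apply seq_NoDup].
      rewrite (map_eval_ext _ v ts) in H; auto.
      intros z Hz; apply upds_notin, Hfr, Hts; auto.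
    + assert (Hgl : length (fargs g) = length ys).
      { unfold wf_db in Hdw; rewrite Forall_forall in Hdw; destruct (Hdw g Hg) as [_ L].
        unfold ys, ysOf; rewrite length_seq; congruence. }
      rewrite holds_KM, map_eval_TVar, upds_map; auto; [|apply seq_NoDup].
      rewrite (map_eval_ext _ v ts); auto.
      intros z Hz; apply upds_notin, Hfr, Hts; auto.
Qed.

Definition phi4 (D : list constr) (A : atom) (j x : nat) (X : list nat) (p : formula) : formula :=
  let R := arel A in let Kt := firstn (rkey R) (aargs A) in
  let ys := ysOf (x :: X) (rarity R) in
  FAnd (ExistsL ys (FAnd (AtomD D R (map TVar ys)) (KM (map TVar ys) Kt)))
       (ForallL ys (FOr (FNot (FAnd (AtomD D R (map TVar ys)) (KM (map TVar ys) Kt)))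
            (FForall x (FOr (FNot (FEq (TVar x) (TVar (nth j ys 0)))) p)))).

Lemma phi4_ok q D A j x X p :
  wf_query q -> self_join_free q -> In A q -> (forall z, In z (akey A) -> In z X) -> ~ In x X ->
  nth j (aargs A) (TCst 0) = TVar x -> (forall z, In z (dvars D) -> In z X) ->
  (forall z, In z (fv p) -> In z (x :: X)) ->
  (forall d v, wf_db d -> (holds d v p <->
      certainV q (x :: X) v (del (D ++ [(arel A, firstn (rkey (arel A)) (aargs A), j, TVar x)]) v d))) ->
  (forall z, In z (fv (phi4 D A j x X p)) -> In z X) /\
  forall d v, wf_db d -> (holds d v (phi4 D A j x X p) <-> certainV q X v (del D v d)).
Proof.
  intros Hq Hs HA HkX Hx Hj HD Hfv Hp. unfold phi4.
  assert (HwA : wf_atom A) by (unfold wf_query in Hq; rewrite Forall_forall in Hq; auto).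
  destruct HwA as [[Hk1 Hk2] Hl].
  set (R := arel A) in *; set (Kt := firstn (rkey R) (aargs A)); set (ys := ysOf (x :: X) (rarity R)).
  assert (Hfr : forall z, In z (x :: X) -> ~ In z ys) by (intros z Hz; apply fresh_seq; auto).
  assert (Hjl : j < length (aargs A)).
  { destruct (Nat.lt_ge_cases j (length (aargs A))) as [?|Hge]; auto. rewrite nth_overflow in Hj; auto; discriminate. }
  assert (Hys : length ys = rarity R) by (unfold ys, ysOf; apply length_seq).
  assert (Hyj : In (nth j ys 0) ys) by (apply nth_In; lia).
  assert (HKt : forall z, In z (flat_map term_vars Kt) -> In z X) by exact HkX.
  split.
  - intros z Hz. simpl in Hz. apply in_app_or in Hz; destruct Hz as [Hz|Hz].
    + apply fv_ExistsL in Hz; destruct Hz as [Hz Hn]. simpl in Hz.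
      apply in_app_or in Hz; destruct Hz as [Hz|Hz].
      * apply fv_AtomD in Hz; destruct Hz as [Hz|Hz]; auto. apply vars_TVar in Hz; tauto.
      * apply fv_KM in Hz; destruct Hz as [Hz|Hz]; [apply vars_TVar in Hz; tauto|auto].
    + apply fv_ForallL in Hz; destruct Hz as [Hz Hn]. simpl in Hz.
      apply in_app_or in Hz; destruct Hz as [Hz|Hz]; [apply in_app_or in Hz; destruct Hz as [Hz|Hz]|].
      * apply fv_AtomD in Hz; destruct Hz as [Hz|Hz]; auto. apply vars_TVar in Hz; tauto.
      * apply fv_KM in Hz; destruct Hz as [Hz|Hz]; [apply vars_TVar in Hz; tauto|auto].
      * revert Hz; destruct (Nat.eq_dec x x); [|congruence]; destruct (Nat.eq_dec x (nth j ys 0)); intros Hz.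
        -- apply in_remove in Hz; destruct Hz as [Hz Hzx]; apply Hfv in Hz; destruct Hz; [congruence|auto].
        -- destruct Hz as [Hz|Hz]; [exfalso; apply Hn; rewrite <- Hz; auto|].
           apply in_remove in Hz; destruct Hz as [Hz Hzx]; apply Hfv in Hz; destruct Hz; [congruence|auto].
  - intros d v Hd.
    assert (Hdw := wf_del D v d Hd).
    assert (HKt' : forall z, In z (flat_map term_vars Kt) -> In z (x :: X)) by (intros; simpl; auto).
    assert (HD' : forall z, In z (dvars D) -> In z (x :: X)) by (intros; simpl; auto).
    assert (Hdel : forall c u f, (forall y, In y (x :: X) -> u y = upd v x c y) ->
      (In f (del (D ++ [(R, Kt, j, TVar x)]) u d) <-> In f (filter (keep (R, Kt, j, TVar x) (upd v x c)) (del D v d)))).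
    { intros c u f Hu. rewrite (del_ext _ u (upd v x c)).
      - rewrite filter_In, !in_del. unfold keepAll; rewrite forallb_app; simpl.
        rewrite Bool.andb_true_iff, Bool.andb_true_r.
        fold (keepAll D (upd v x c) f) (keepAll D v f).
        rewrite (keepAll_ext D (upd v x c) v). tauto.
        intros z Hz. assert (In z X) as HzX by auto. apply upd_neq; intros ->; auto.
      - intros z Hz. apply Hu. unfold dvars in Hz; rewrite flat_map_app in Hz; apply in_app_or in Hz.
        destruct Hz as [Hz|Hz]; [simpl; auto|]. simpl in Hz. rewrite app_nil_r in Hz.
        apply in_app_or in Hz; destruct Hz as [Hz|[Hz|[]]]; simpl; auto. }
    rewrite holds_FAnd, (holds_blockEx d v D R Kt ys (x :: X)), (holds_blockAll d v D R Kt ys (x :: X));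
      auto; try apply seq_NoDup.
    rewrite (se4_sem q X x v (del D v d) A j Hdw Hq Hs HA HkX Hx Hj). fold R Kt.
    apply and_iff_compat_l.
    split; intros H g Hg Hr Hk; specialize (H g Hg Hr Hk).
    +
      assert (Hgl : length (fargs g) = length ys).
      { unfold wf_db in Hdw; rewrite Forall_forall in Hdw; destruct (Hdw g Hg) as [_ L]. congruence. }
      set (u := upds v ys (fargs g)) in H.
      assert (Hu : u (nth j ys 0) = nth j (fargs g) 0).
      { unfold u. rewrite <- (map_nth (upds v ys (fargs g)) ys 0 j).
        rewrite upds_map by (auto; apply seq_NoDup). apply nth_indep. lia. }
      set (c := nth j (fargs g) 0) in *.
      assert (Hag : forall y, In y (x :: X) -> upd u x c y = upd v x c y).
      { intros y [<-|Hy]; [rewrite !upd_eq; auto|]. destruct (Nat.eq_dec y x) as [->|ne]; [rewrite !upd_eq; auto|].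
          rewrite !upd_neq by auto. unfold u; apply upds_notin, Hfr; simpl; auto. }
      specialize (H c). simpl in H. rewrite upd_eq, upd_neq in H by (intros E; apply (Hfr x); simpl; auto; rewrite <- E; auto).
      destruct H as [H|H]; [exfalso; apply H; auto|].
      apply Hp in H; auto.
      rewrite (certainV_ext q (x :: X) (upd u x c) (upd v x c)) in H.
      2: exact Hag.
      eapply certainV_db; [|exact H]. intros f. symmetry. apply Hdel. exact Hag.
    + assert (Hgl : length (fargs g) = length ys).
      { unfold wf_db in Hdw; rewrite Forall_forall in Hdw; destruct (Hdw g Hg) as [_ L]. congruence. }
      set (u := upds v ys (fargs g)).
      assert (Hu : u (nth j ys 0) = nth j (fargs g) 0).
      { unfold u. rewrite <- (map_nth (upds v ys (fargs g)) ys 0 j).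
        rewrite upds_map by (auto; apply seq_NoDup). apply nth_indep. lia. }
      set (c := nth j (fargs g) 0) in *.
      assert (Hag : forall y, In y (x :: X) -> upd u x c y = upd v x c y).
      { intros y [<-|Hy]; [rewrite !upd_eq; auto|]. destruct (Nat.eq_dec y x) as [->|ne]; [rewrite !upd_eq; auto|].
          rewrite !upd_neq by auto. unfold u; apply upds_notin, Hfr; simpl; auto. }
      intros c'. simpl. rewrite upd_eq, upd_neq by (intros E; apply (Hfr x); simpl; auto; rewrite <- E; auto).
      destruct (Nat.eq_dec c' c) as [->|ne]; [right|left; congruence].
      apply Hp; auto.
      rewrite (certainV_ext q (x :: X) (upd u x c) (upd v x c)).
      2: exact Hag.
      eapply certainV_db; [|exact H]. intros f. apply Hdel. exact Hag.
Qed.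


Definition Claim (q : query) (X : list nat) (D : list constr) : Prop :=
  exists phi, (forall z, In z (fv phi) -> In z X) /\
    forall d v, wf_db d -> (holds d v phi <-> certainV q X v (del D v d)).

Lemma claim_nil X D : Claim [] X D.
Proof.
  exists FTrue; split; [intros z []|]. intros d v _; simpl; split; auto; intros _; apply certainV_nil.
Qed.

Lemma claim_same q1 q2 X D : (forall A, In A q1 <-> In A q2) -> Claim q1 X D -> Claim q2 X D.
Proof.
  intros H [phi [H1 H2]]; exists phi; split; auto; intros d v Hd; rewrite H2 by auto; apply certainV_q; auto.
Qed.

Lemma in_substX G X a q : In G (substX X a q) <-> exists A, In A q /\ G = substX_atom X a A.
Proof. unfold substX; rewrite in_map_iff; split; intros [A [H1 H2]]; eauto. Qed.

Lemma main a : forall q', safe a q' -> forall q X D,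
  (forall G, In G q' <-> In G (substX X a q)) -> wf_query q -> self_join_free q ->
  (forall z, In z (dvars D) -> In z X) -> Claim q X D.
Proof.
  induction 1 as [q' [[F HF] Hv]
                 |q' q1 q2 _ _ _ Hsplit Hdisj _ IH1 _ IH2
                 |q' x _ _ Hk _ IH
                 |q' F x _ _ _ HF Hkey Hx _ IH];
    intros q X D Hsame Hq Hs HD;
    (destruct q as [|A0 q0] eqn:Eq; [apply claim_nil|]; rewrite <- Eq in *).
  -
    assert (HA0 : In A0 q) by (rewrite Eq; simpl; auto).
    assert (Hall : forall A, In A q -> A = A0).
    { intros A HA. apply Hs; auto.
      assert (E1 : substX_atom X a A = F) by (apply HF, Hsame, in_map; auto).
      assert (E2 : substX_atom X a A0 = F) by (apply HF, Hsame, in_map; auto).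
      unfold substX_atom in E1, E2; rewrite <- E2 in E1; inversion E1; auto. }
    assert (HX : forall z, In z (avars A0) -> In z X).
    { intros z Hz. destruct (in_dec Nat.eq_dec z X) as [i|n]; auto.
      assert (In z (qvars q')); [|rewrite Hv in *; contradiction].
      unfold qvars; apply in_flat_map; exists (substX_atom X a A0); split.
      - apply Hsame, in_map; auto.
      - apply avars_substX; auto. }
    assert (HwA : wf_atom A0) by (unfold wf_query in Hq; rewrite Forall_forall in Hq; auto).
    apply (claim_same [A0]).
    + intros A; split; [intros [<-|[]]; auto|intros HA; left; symmetry; auto].
    + destruct (phi1_ok D A0 X HwA HX HD) as [H1 H2]. exists (phi1 D A0 X); auto.
  -
    set (qa := filter (fun A => if in_dec atom_eq_dec (substX_atom X a A) q1 then true else false) q).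
    set (qb := filter (fun A => if in_dec atom_eq_dec (substX_atom X a A) q2 then true else false) q).
    assert (Sa : forall G, In G q1 <-> In G (substX X a qa)).
    { intros G; rewrite in_substX; split.
      - intros HG. assert (HG' : In G (substX X a q)) by (apply Hsame, Hsplit; auto).
        apply in_substX in HG'; destruct HG' as [A [HA ->]]. exists A; split; auto.
        apply filter_In; split; auto. destruct (in_dec atom_eq_dec (substX_atom X a A) q1); auto.
      - intros [A [HA ->]]. apply filter_In in HA; destruct HA as [_ HA].
        destruct (in_dec atom_eq_dec (substX_atom X a A) q1); auto; discriminate. }
    assert (Sb : forall G, In G q2 <-> In G (substX X a qb)).
    { intros G; rewrite in_substX; split.
      - intros HG. assert (HG' : In G (substX X a q)) by (apply Hsame, Hsplit; auto).
        apply in_substX in HG'; destruct HG' as [A [HA ->]]. exists A; split; auto.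
        apply filter_In; split; auto. destruct (in_dec atom_eq_dec (substX_atom X a A) q2); auto.
      - intros [A [HA ->]]. apply filter_In in HA; destruct HA as [_ HA].
        destruct (in_dec atom_eq_dec (substX_atom X a A) q2); auto; discriminate. }
    destruct (IH1 qa X D Sa (wf_query_filter _ _ Hq) (sjf_filter _ _ Hs) HD) as [p1 [F1 G1]].
    destruct (IH2 qb X D Sb (wf_query_filter _ _ Hq) (sjf_filter _ _ Hs) HD) as [p2 [F2 G2]].
    exists (FAnd p1 p2); split.
    + intros z Hz; simpl in Hz; apply in_app_or in Hz; destruct Hz; auto.
    + intros d v Hd. rewrite holds_FAnd, G1, G2 by auto. symmetry; apply se2.
      * intros A; split.
        -- intros HA. assert (HG : In (substX_atom X a A) q') by (apply Hsame, in_map; auto).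
           apply Hsplit in HG; destruct HG as [HG|HG]; [left|right]; apply filter_In; split; auto.
           ++ destruct (in_dec atom_eq_dec (substX_atom X a A) q1); auto.
           ++ destruct (in_dec atom_eq_dec (substX_atom X a A) q2); auto.
        -- intros [HA|HA]; apply filter_In in HA; tauto.
      * intros z Hz1 Hz2. destruct (in_dec Nat.eq_dec z X) as [i|n]; auto. exfalso.
        apply (Hdisj z).
        -- apply (qvars_same z _ _ Sa), qvars_substX; auto.
        -- apply (qvars_same z _ _ Sb), qvars_substX; auto.
  -
    assert (HA0 : In A0 q) by (rewrite Eq; simpl; auto).
    assert (HkA : forall A, In A q -> In x (akey A) /\ ~ In x X).
    { intros A HA; apply (proj1 (akey_substX x X a A)), Hk, Hsame, in_map; auto. }
    assert (HxX : ~ In x X) by (apply (HkA A0 HA0)).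
    assert (S' : forall G, In G (subst x a q') <-> In G (substX (x :: X) a q)).
    { intros G; rewrite <- subst_substX; unfold subst; rewrite !in_map_iff.
      split; intros [B [HB HB']]; exists B; split; auto; apply Hsame; auto. }
    destruct (IH q (x :: X) D S' Hq Hs ltac:(intros z Hz; simpl; auto)) as [p [Fp Gp]].
    exists (FExists x p); split.
    + intros z Hz; simpl in Hz; apply in_remove in Hz; destruct Hz as [Hz Hzx].
      apply Fp in Hz; destruct Hz; [congruence|auto].
    + intros d v Hd. simpl.
      rewrite (se3 q X x v (del D v d) Hs ltac:(intros A HA; apply HkA; auto) HxX).
      split; intros [c Hc]; exists c.
      * apply Gp in Hc; auto. eapply certainV_db; [|exact Hc]. intros g; apply del_ext.
        intros z Hz; symmetry; apply upd_neq; intros ->; auto.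
      * apply Gp; auto. eapply certainV_db; [|exact Hc]. intros g; apply del_ext.
        intros z Hz; apply upd_neq; intros ->; auto.
  -
    assert (HF' : In F (substX X a q)) by (apply Hsame; auto).
    apply in_substX in HF'; destruct HF' as [A [HA ->]].
    apply avars_substX in Hx; destruct Hx as [HxA HxX].
    assert (HkX : forall z, In z (akey A) -> In z X).
    { intros z Hz. destruct (in_dec Nat.eq_dec z X) as [i|n]; auto.
      assert (In z (akey (substX_atom X a A))) by (apply akey_substX; auto).
      rewrite Hkey in *; contradiction. }
    set (j := idx (TVar x) (aargs A)).
    assert (Hj : nth j (aargs A) (TCst 0) = TVar x).
    { apply idx_spec. unfold avars in HxA; apply in_vars_iff; auto. }
    set (dl := (arel A, firstn (rkey (arel A)) (aargs A), j, TVar x)).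
    assert (S' : forall G, In G (subst x a q') <-> In G (substX (x :: X) a q)).
    { intros G; rewrite <- subst_substX; unfold subst; rewrite !in_map_iff.
      split; intros [B [HB HB']]; exists B; split; auto; apply Hsame; auto. }
    assert (Hdl : forall z, In z (dvars (D ++ [dl])) -> In z (x :: X)).
    { intros z Hz. unfold dvars in Hz; rewrite flat_map_app in Hz; apply in_app_or in Hz.
      destruct Hz as [Hz|Hz]; [simpl; auto|]. simpl in Hz. rewrite app_nil_r in Hz.
      apply in_app_or in Hz; destruct Hz as [Hz|[Hz|[]]]; simpl; auto. }
    destruct (IH q (x :: X) (D ++ [dl]) S' Hq Hs Hdl) as [p [Fp Gp]].
    destruct (phi4_ok q D A j x X p Hq Hs HA HkX HxX Hj HD Fp Gp) as [H1 H2].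
    exists (phi4 D A j x X p); auto.
Qed.

Theorem theorem6 (q : query) (a : nat) :
  wf_query q -> self_join_free q -> safe a q -> fo_expressible q.
Proof.
  intros Hq Hs Hsafe.
  destruct (main a q Hsafe q [] [] ltac:(intros G; rewrite substX_nil; tauto) Hq Hs ltac:(intros z [])) as [phi [Hf Hp]].
  exists phi; split.
  - unfold sentence. destruct (fv phi) as [|z l] eqn:E; auto. exfalso. destruct (Hf z); simpl; auto.
  - intros d Hd. unfold models. rewrite Hp by auto.
    unfold certain, certainV, satisfies.
    assert (Hdel : forall g, In g (del [] (fun _ => 0) d) <-> In g d) by (intros g; rewrite in_del; simpl; tauto).
    split.
    + intros H r Hr. apply (repair_db r _ _ Hdel) in Hr. destruct (H r Hr) as [w Hw]. exists w; split; [intros y []|auto].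
    + intros H r Hr. apply (repair_db r _ _ Hdel) in Hr. destruct (H r Hr) as [w [_ Hw]]; exists w; auto.
Qed.
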